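(* Let $w\ge 3$ and $v=w-1$. Then $$\sum_{\substack{a+b=w\\ a\ge2,\ b\ge1}} T(a,b)=2\Big(\zeta(w)-\zeta(\bar w)+\zeta(\bar v,\bar1)+\zeta(\bar1,\bar v)-\zeta(\bar v,1)-\zeta(\bar1,v)\Big).$$
   Context: Multiple $T$-values: for positive integers $s_1,\dots,s_d$ with $s_1>1$, $T(s_1,\dots,s_d)=\sum_{m_1>\dots>m_d>0,\ m_j\equiv d-j+1\ (\mathrm{mod}\ 2)}\frac{2^d}{m_1^{s_1}\cdots m_d^{s_d}}$. Euler sums: $\zeta(s_1,\dots,s_d;z_1,\dots,z_d)=\sum_{n_1>\dots>n_d>0}\frac{z_1^{n_1}\cdots z_d^{n_d}}{n_1^{s_1}\cdots n_d^{s_d}}$ for $z_j\in\{\pm1\}$ (convergent iff $(s_1,z_1)\ne(1,1)$); a bar over the $j$-th argument means $z_j=-1$, no bar means $z_j=1$. *)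

(* Defs.v *)
From Stdlib Require Import Reals.
From Coquelicot Require Import Coquelicot.
Open Scope R_scope.

(* Convention: an infinite nested sum over n1 > n2 > 0 is the limit, as N -> oo,
   of the truncated sum over N >= n1 > n2 > 0 (outer index truncated).
   This is the standard meaning, and covers the conditionally convergent case
   s1 = 1, z1 = -1. *)

Definition euler1_partial (s : nat) (z : R) (N : nat) : R :=
  sum_n (fun k => z ^ (S k) / (INR (S k)) ^ s) N.
Definition euler1 (s : nat) (z : R) : R :=
  real (Lim_seq (fun N => euler1_partial s z N)).

Definition euler2_partial (s1 s2 : nat) (z1 z2 : R) (N : nat) : R :=
  sum_n (fun k1 =>
    sum_n (fun k2 =>
      if (k2 <? k1)%nat then
        (z1 ^ (S k1) * z2 ^ (S k2)) / ((INR (S k1)) ^ s1 * (INR (S k2)) ^ s2)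
      else 0) N) N.
Definition euler2 (s1 s2 : nat) (z1 z2 : R) : R :=
  real (Lim_seq (fun N => euler2_partial s1 s2 z1 z2 N)).

(* Depth-2 multiple T-value:
   T(s1,s2) = sum_{m1>m2>0, m1 even, m2 odd} 2^2 / (m1^s1 m2^s2)
   (m_j = d-j+1 mod 2 with d = 2: m1 = 0 mod 2, m2 = 1 mod 2). *)
Definition T2_partial (s1 s2 : nat) (N : nat) : R :=
  sum_n (fun k1 =>
    sum_n (fun k2 =>
      if ((k2 <? k1)%nat && Nat.even (S k1) && Nat.odd (S k2))%bool then
        2 ^ 2 / ((INR (S k1)) ^ s1 * (INR (S k2)) ^ s2)
      else 0) N) N.
Definition T2 (s1 s2 : nat) : R :=
  real (Lim_seq (fun N => T2_partial s1 s2 N)).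

(* Main.v *)
Require Import Defs.
From Stdlib Require Import Reals Lia Lra.
From Coquelicot Require Import Coquelicot.
Open Scope R_scope.

Fixpoint Sm (n:nat) (f:nat->R) : R :=
  match n with O => 0 | S p => Sm p f + f (S p) end.

Lemma Sm_ext n f g : (forall m, (1 <= m <= n)%nat -> f m = g m) -> Sm n f = Sm n g.
Proof.
  induction n; simpl; intros H; auto.
  rewrite IHn by (intros; apply H; lia). rewrite H by lia. reflexivity.
Qed.

Lemma Sm_plus n f g : Sm n (fun m => f m + g m) = Sm n f + Sm n g.
Proof. induction n; simpl; [ring|]. rewrite IHn; ring. Qed.

Lemma Sm_minus n f g : Sm n (fun m => f m - g m) = Sm n f - Sm n g.
Proof. induction n; simpl; [ring|]. rewrite IHn; ring. Qed.

Lemma Sm_scal n c f : Sm n (fun m => c * f m) = c * Sm n f.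
Proof. induction n; simpl; [ring|]. rewrite IHn; ring. Qed.

Lemma Sm_zero n : Sm n (fun _ => 0) = 0.
Proof. induction n; simpl; [ring|]. rewrite IHn; ring. Qed.

Lemma Sm_le n f g : (forall m, (1 <= m <= n)%nat -> f m <= g m) -> Sm n f <= Sm n g.
Proof.
  induction n; simpl; intros H; [lra|].
  apply Rplus_le_compat; [apply IHn; intros; apply H; lia | apply H; lia].
Qed.

Lemma Sm_nonneg n f : (forall m, (1 <= m <= n)%nat -> 0 <= f m) -> 0 <= Sm n f.
Proof. intros H. rewrite <- (Sm_zero n). apply Sm_le. auto. Qed.

Lemma Sm_abs n f : Rabs (Sm n f) <= Sm n (fun m => Rabs (f m)).
Proof.
  induction n; simpl. rewrite Rabs_R0; lra.
  eapply Rle_trans; [apply Rabs_triang|]. lra.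
Qed.

Lemma sumn_Sm (g:nat->R) N : sum_n (fun k => g (S k)) N = Sm (S N) g.
Proof.
  induction N. rewrite sum_O. simpl; ring.
  rewrite sum_Sn, IHN. reflexivity.
Qed.

Lemma Sm_shift n g : Sm (S n) g = g 1%nat + Sm n (fun m => g (S m)).
Proof.
  induction n. simpl; ring.
  change (Sm (S (S n)) g) with (Sm (S n) g + g (S (S n))).
  rewrite IHn. simpl. ring.
Qed.

Lemma Sm_refl n f : Sm n (fun j => f (S n - j)%nat) = Sm n f.
Proof.
  revert f; induction n; intros f. reflexivity.
  rewrite (Sm_shift n f).
  change (Sm (S n) (fun j => f (S (S n) - j)%nat)) with
     (Sm n (fun j => f (S (S n) - j)%nat) + f (S (S n) - S n)%nat).
  replace (S (S n) - S n)%nat with 1%nat by lia.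
  rewrite <- (IHn (fun m => f (S m))).
  rewrite (Sm_ext n (fun j => f (S (S n) - j)%nat) (fun j => f (S (S n - j)))).
  ring. intros; f_equal; lia.
Qed.

Lemma Sm_swap (F : nat -> nat -> R) K n :
  sum_n (fun k => Sm n (F k)) K = Sm n (fun m => sum_n (fun k => F k m) K).
Proof.
  induction n; simpl.
  - induction K. rewrite sum_O; reflexivity. rewrite sum_Sn, IHK. unfold plus; simpl; ring.
  - rewrite <- IHn. rewrite <- (sum_n_plus (fun k => Sm n (F k)) (fun k => F k (S n))).
    reflexivity.
Qed.

Lemma inner_trunc (h : nat -> R) k1 N :
  sum_n (fun k2 => if (k2 <? k1)%nat then h k2 else 0) N = Sm (Nat.min (S N) k1) (fun m => h (pred m)).
Proof.
  induction N.
  - rewrite sum_O. destruct k1; simpl. reflexivity. ring.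
  - rewrite sum_Sn, IHN. change plus with Rplus.
    destruct (Nat.ltb_spec (S N) k1).
    + rewrite (Nat.min_l (S N) k1) by lia. rewrite (Nat.min_l (S (S N)) k1) by lia.
      reflexivity.
    + rewrite (Nat.min_r (S N) k1) by lia. rewrite (Nat.min_r (S (S N)) k1) by lia. apply Rplus_0_r.
Qed.

Lemma double_sum (F : nat -> nat -> R) N :
  sum_n (fun k1 => sum_n (fun k2 => if (k2 <? k1)%nat then F k1 k2 else 0) N) N
  = Sm (S N) (fun m => Sm (pred m) (fun j => F (pred m) (pred j))).
Proof.
  rewrite <- sumn_Sm. apply sum_n_ext_loc. intros k Hk.
  rewrite inner_trunc. rewrite Nat.min_r by lia. reflexivity.
Qed.


Definition od (m:nat) : R := if Nat.odd m then 1 else 0.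
Definition ev (m:nat) : R := if Nat.even m then 1 else 0.

Lemma INR_pow_neq0 m s : (1 <= m)%nat -> INR m ^ s <> 0.
Proof. intros. apply pow_nonzero. apply not_0_INR. lia. Qed.

Lemma euler1_Sm s z N : euler1_partial s z N = Sm (S N) (fun m => z^m / INR m ^ s).
Proof. unfold euler1_partial. exact (sumn_Sm (fun m => z^m / INR m ^ s) N). Qed.

Lemma euler2_Sm s1 s2 z1 z2 N : euler2_partial s1 s2 z1 z2 N =
  Sm (S N) (fun m => z1^m / INR m ^ s1 * Sm (pred m) (fun j => z2^j / INR j ^ s2)).
Proof.
  unfold euler2_partial. rewrite double_sum. apply Sm_ext. intros m Hm.
  rewrite <- Sm_scal. apply Sm_ext. intros j Hj.
  replace (S (pred m)) with m by lia. replace (S (pred j)) with j by lia.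
  field. split; apply INR_pow_neq0; lia.
Qed.

Lemma T2_Sm a b N : T2_partial a b N =
  Sm (S N) (fun m => 4 * ev m / INR m ^ a * Sm (pred m) (fun j => od j / INR j ^ b)).
Proof.
  unfold T2_partial.
  transitivity (sum_n (fun k1 => sum_n (fun k2 => if (k2 <? k1)%nat then
     (4 * ev (S k1) / INR (S k1) ^ a * (od (S k2) / INR (S k2) ^ b)) else 0) N) N).
  { apply sum_n_ext. intros k1. apply sum_n_ext. intros k2.
    assert (H1 : INR (S k1) ^ a <> 0) by (apply INR_pow_neq0; lia).
    assert (H2 : INR (S k2) ^ b <> 0) by (apply INR_pow_neq0; lia).
    unfold ev, od. destruct (k2 <? k1)%nat, (Nat.even (S k1)), (Nat.odd (S k2)); simpl in *;
    try reflexivity; try field; try split; auto; try ring. }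
  rewrite double_sum. apply Sm_ext. intros m Hm.
  rewrite <- Sm_scal. apply Sm_ext. intros j Hj.
  replace (S (pred m)) with m by lia. replace (S (pred j)) with j by lia. reflexivity.
Qed.


Definition Hs (s M : nat) : R := Sm M (fun j => od j / INR j ^ s).
Definition Tt (v M : nat) : R := Sm M (fun j => od j / INR j ^ v * Hs 1 (M - j)).
Definition Ss (v M : nat) : R := Hs v M * Hs 1 M.
Definition rowTT (v m : nat) : R :=
  Sm (pred m) (fun j => od j / INR j ^ v * (od (m - j) / INR (m - j) ^ 1)).
Definition rowSS (v m : nat) : R :=
  od m / INR m ^ v * Hs 1 (pred m) + od m / INR m ^ 1 * Hs v (pred m) + od m / INR m ^ (S v).

Lemma Sm_S n f : Sm (S n) f = Sm n f + f (S n).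
Proof. reflexivity. Qed.

Lemma od01 m : od m * od m = od m.
Proof. unfold od; destruct (Nat.odd m); ring. Qed.

Lemma odpow a x s : a * a = a -> x <> 0 -> a / x^1 * (a / x^s) = a / x^(S s).
Proof.
  intros H Hx. replace (a / x^(S s)) with (a*a/x^(S s)) by (rewrite H; reflexivity).
  simpl. field. split; auto. apply pow_nonzero; auto.
Qed.

Lemma Tt_step v M : Tt v (S M) = Tt v M + rowTT v (S M).
Proof.
  unfold Tt, rowTT. rewrite Sm_S. replace (S M - S M)%nat with 0%nat by lia.
  replace (Hs 1 0) with 0 by reflexivity. rewrite Rmult_0_r, Rplus_0_r. change (pred (S M)) with M.
  rewrite <- Sm_plus. apply Sm_ext. intros j Hj.
  replace (S M - j)%nat with (S (M - j)) by lia. unfold Hs; rewrite Sm_S. ring.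
Qed.

Lemma Ss_step v M : Ss v (S M) = Ss v M + rowSS v (S M).
Proof.
  unfold Ss, rowSS, Hs. rewrite !Sm_S. simpl pred.
  assert (E: od (S M) / INR (S M) ^ 1 * (od (S M) / INR (S M) ^ v) = od (S M) / INR (S M) ^ S v).
  { apply odpow. apply od01. apply not_0_INR. lia. }
  rewrite <- E. ring.
Qed.

Lemma TS_Sm v M : Tt v M - Ss v M = Sm M (fun m => rowTT v m - rowSS v m).
Proof.
  induction M.
  - unfold Tt, Ss, Hs; simpl. ring.
  - rewrite Tt_step, Ss_step, Sm_S. rewrite <- IHM. ring.
Qed.

Lemma sum_n_scal (c:R) u n : sum_n (fun k => c * u k) n = c * sum_n u n.
Proof. exact (sum_n_mult_l c u n). Qed.

Lemma geom x y n : (y - x) * sum_n (fun k => x^(k+2) * y^(S n - k)) n = x^2 * y^(n+2) - x^(n+3) * y.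
Proof.
  induction n.
  - rewrite sum_O. simpl. ring.
  - rewrite sum_Sn. change plus with Rplus.
    rewrite (sum_n_ext_loc _ (fun k => y * (x^(k+2) * y^(S n - k)))).
    2:{ intros k Hk. replace (S (S n) - k)%nat with (S (S n - k)) by lia. simpl. ring. }
    rewrite sum_n_scal.
    replace (S (S n) - S n)%nat with 1%nat by lia.
    rewrite Rmult_plus_distr_l.
    replace ((y - x) * (y * sum_n (fun k => x ^ (k + 2) * y ^ (S n - k)) n))
      with (y * ((y - x) * sum_n (fun k => x ^ (k + 2) * y ^ (S n - k)) n)) by ring.
    rewrite IHn. replace (S n + 2)%nat with (S (n+2)) by lia.
    replace (n + 3)%nat with (S (n+2)) by lia. replace (S n + 3)%nat with (S (S (n+2))) by lia.
    simpl. ring.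
Qed.


Lemma perj_core n x y (G : R) : 0 < x < y ->
  (y-x)*G = x^2*y^(n+2) - x^(n+3)*y ->
  G + x^(n+2)*y + x*y^(n+2) - y^(n+2) * / (/x - /y)
  = x^(n+2) * (y - / (/x - /y)).
Proof.
  intros [Hx Hxy] HG2.
  assert (Hyx : y - x <> 0) by lra.
  assert (HG' : G = (x ^ 2 * y ^ (n + 2) - x ^ (n + 3) * y) / (y - x)).
  { rewrite <- HG2. field. auto. }
  rewrite HG'. replace (n+3)%nat with (S (n+2)) by lia. simpl pow.
  set (X := x^(n+2)). set (Y := y^(n+2)).
  assert (/x - /y = (y - x) / (x*y)) by (field; lra).
  rewrite H. field. repeat split; lra.
Qed.

Lemma perj n x y : 0 < x < y ->
  sum_n (fun k => x^(k+2) * y^(S n - k)) n + x^(n+2)*y + x*y^(n+2) - y^(n+2) * / (/x - /y)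
  = x^(n+2) * (y - / (/x - /y)).
Proof. intros H. apply perj_core; auto. exact (geom x y n). Qed.

Lemma perj2 n M J : 0 < J < M ->
  sum_n (fun k => (/M)^(k+2) * (/J)^(S n - k)) n + (/M)^(n+2) * /J + /M * (/J)^(n+2)
   - (/J)^(n+2) * /(M-J) = (/M)^(n+2) * (/J - /(M-J)).
Proof.
  intros H. pose proof (perj n (/M) (/J)) as P. rewrite !Rinv_inv in P.
  apply P. split. apply Rinv_0_lt_compat; lra. apply Rinv_lt_contravar; nra.
Qed.

Lemma od_S j : od (S j) = 1 - od j.
Proof. unfold od. rewrite Nat.odd_succ, <- Nat.negb_odd. destruct (Nat.odd j); simpl; ring. Qed.

Lemma m1pow j : (-1)^j = 1 - 2 * od j.
Proof.
  induction j. unfold od; simpl; ring.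
  simpl pow. rewrite IHj, od_S. unfold od; destruct (Nat.odd j); ring.
Qed.

Lemma ev_od m : ev m = 1 - od m.
Proof. unfold ev, od. rewrite <- Nat.negb_odd. destruct (Nat.odd m); simpl; ring. Qed.

Lemma od_sub m j : (j <= m)%nat -> od (m - j) = if Nat.odd m then 1 - od j else od j.
Proof.
  intros H. unfold od. rewrite Nat.odd_sub by auto.
  destruct (Nat.odd m), (Nat.odd j); simpl; ring.
Qed.

Lemma od_cases j : od j = 0 \/ od j = 1.
Proof. unfold od; destruct (Nat.odd j); auto. Qed.

Lemma od_bounds j : 0 <= od j <= 1.
Proof. destruct (od_cases j) as [E|E]; rewrite E; lra. Qed.

Definition rowL n m := sum_n (fun k => 4 * ev m / INR m ^ (k+2) *
   Sm (pred m) (fun j => od j / INR j ^ ((n+3) - (k+2)))) n.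
Definition rowR n m := 1^m / INR m ^ (n+3) - (-1)^m / INR m ^ (n+3)
  + (-1)^m / INR m ^ (n+2) * Sm (pred m) (fun j => (-1)^j / INR j ^ 1)
  + (-1)^m / INR m ^ 1 * Sm (pred m) (fun j => (-1)^j / INR j ^ (n+2))
  - (-1)^m / INR m ^ (n+2) * Sm (pred m) (fun j => 1^j / INR j ^ 1)
  - (-1)^m / INR m ^ 1 * Sm (pred m) (fun j => 1^j / INR j ^ (n+2)).

Lemma alt_split s p : Sm p (fun j => (-1)^j / INR j ^ s) =
   Sm p (fun j => 1^j / INR j ^ s) - 2 * Hs s p.
Proof.
  unfold Hs. rewrite <- Sm_scal, <- Sm_minus. apply Sm_ext; intros j Hj.
  rewrite m1pow, pow1. field. apply INR_pow_neq0; lia.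
Qed.

Lemma rowL_eq n m : (1 <= m)%nat -> rowL n m = 4 * ev m *
  Sm (pred m) (fun j => od j * sum_n (fun k => (/ INR m) ^ (k+2) * (/ INR j) ^ (S n - k)) n).
Proof.
  intros Hm. unfold rowL.
  transitivity (sum_n (fun k => Sm (pred m) (fun j => 4 * ev m *
       (od j * ((/ INR m) ^ (k+2) * (/ INR j) ^ (S n - k))))) n).
  { apply sum_n_ext_loc; intros k Hk. rewrite <- !Sm_scal. apply Sm_ext; intros j Hj.
    replace (n+3-(k+2))%nat with (S n - k)%nat by lia. rewrite !pow_inv. unfold Rdiv. ring. }
  rewrite Sm_swap. rewrite <- Sm_scal. apply Sm_ext; intros j Hj.
  rewrite sum_n_scal. rewrite sum_n_scal. reflexivity.
Qed.


Lemma refl_H1 m : (1 <= m)%nat ->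
  Sm (pred m) (fun j => od (m - j) / INR (m - j) ^ 1) = Hs 1 (pred m).
Proof.
  intros Hm. pose proof (Sm_refl (pred m) (fun j => od j / INR j ^ 1)) as H.
  replace (S (pred m)) with m in H by lia. exact H.
Qed.

Lemma row_id n m : (1 <= m)%nat ->
  rowL n m - 2 * rowR n m = 4 * (rowTT (n+2) m - rowSS (n+2) m).
Proof.
  intros Hm. rewrite rowL_eq by auto. unfold rowR. rewrite !alt_split. rewrite ev_od, m1pow, pow1.
  unfold rowSS.
  set (P1 := Sm (pred m) (fun j => 1^j / INR j ^ 1)).
  set (Pv := Sm (pred m) (fun j => 1^j / INR j ^ (n+2))).
  replace (n+3)%nat with (S (n+2)) by lia.
  destruct (Nat.odd m) eqn:Hodd.
  - assert (E : od m = 1) by (unfold od; rewrite Hodd; auto). rewrite E.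
    assert (E2 : rowTT (n+2) m = 0).
    { unfold rowTT. rewrite <- (Sm_zero (pred m)). apply Sm_ext; intros j Hj.
      rewrite od_sub by lia. rewrite Hodd. destruct (od_cases j) as [F|F]; rewrite F; unfold Rdiv; ring. }
    rewrite E2. set (A := Sm (pred m) _). set (X1 := INR m ^ S (n+2)). set (X2 := INR m ^ (n+2)).
    set (X3 := INR m ^ 1). set (H1 := Hs 1 (pred m)). set (H2 := Hs (n+2) (pred m)). unfold Rdiv. ring.
  - assert (E : od m = 0) by (unfold od; rewrite Hodd; auto). rewrite E.
    set (G := Sm (pred m) (fun j => od j * sum_n (fun k => (/ INR m) ^ (k+2) * (/ INR j) ^ (S n - k)) n)).
    assert (K : G + / INR m ^ (n+2) * Hs 1 (pred m) + / INR m ^ 1 * Hs (n+2) (pred m) - rowTT (n+2) m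
       = / INR m ^ (n+2) * (Hs 1 (pred m) - Sm (pred m) (fun j => od (m - j) / INR (m - j) ^ 1))).
    { unfold G, Hs, rowTT. rewrite <- !Sm_scal, <- !Sm_minus, <- !Sm_plus, <- !Sm_minus, <- Sm_scal.
      apply Sm_ext. intros j Hj. rewrite od_sub by lia. rewrite Hodd.
      destruct (od_cases j) as [F|F]; rewrite F.
      - field; repeat split; try (apply INR_pow_neq0; lia); apply not_0_INR; lia.
      - rewrite minus_INR by lia.
        assert (HJ : 0 < INR j < INR m) by (split; [apply lt_0_INR | apply lt_INR]; lia).
        pose proof (perj2 n (INR m) (INR j) HJ) as P.
        rewrite !pow_1. unfold Rdiv. rewrite <- !pow_inv.
        set (SS := sum_n _ n) in *. rewrite !Rmult_1_l. rewrite <- P. ring. }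
    rewrite refl_H1 in K by auto.
    replace (rowTT (n+2) m) with (G + / INR m ^ (n+2) * Hs 1 (pred m) + / INR m ^ 1 * Hs (n+2) (pred m)) by lra.
    unfold Rdiv. ring.
Qed.


Definition Hf (M : nat) : R := Sm M (fun j => / INR j).

Lemma R_form v M : Ss v M - Tt v M = Sm M (fun j => od j / INR j ^ v * (Hs 1 M - Hs 1 (M - j))).
Proof.
  unfold Ss, Tt. unfold Hs at 1. rewrite Rmult_comm, <- Sm_scal, <- Sm_minus.
  apply Sm_ext; intros j Hj. ring.
Qed.

Lemma Hs1_diff n d : 0 <= Hs 1 (n + d) - Hs 1 n <= INR d / INR (S n).
Proof.
  induction d.
  - rewrite Nat.add_0_r. simpl INR. unfold Rdiv. rewrite Rmult_0_l. lra.
  - replace (n + S d)%nat with (S (n + d)) by lia. rewrite (Sm_S (n+d) (fun j => od j / INR j ^ 1) : Hs 1 (S (n+d)) = Hs 1 (n+d) + od (S (n+d)) / INR (S (n+d)) ^ 1).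
    assert (P : 0 < INR (S (n+d))) by (apply lt_0_INR; lia).
    assert (P2 : 0 < INR (S n)) by (apply lt_0_INR; lia).
    assert (Hle : INR (S n) <= INR (S (n + d))) by (apply le_INR; lia).
    assert (T : 0 <= od (S (n+d)) / INR (S (n+d)) ^ 1 <= / INR (S n)).
    { rewrite pow_1. destruct (od_bounds (S (n+d))). split.
      apply Rmult_le_pos; auto. left; apply Rinv_0_lt_compat; auto.
      apply Rle_trans with (1 / INR (S (n+d))). apply Rmult_le_compat_r; auto. left; apply Rinv_0_lt_compat; auto.
      unfold Rdiv; rewrite Rmult_1_l. apply Rinv_le_contravar; auto. }
    rewrite S_INR with (n := d). unfold Rdiv in *. rewrite Rmult_plus_distr_r, Rmult_1_l. lra.
Qed.

Lemma term_bound v M j : (2 <= v)%nat -> (1 <= j <= M)%nat ->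
  0 <= od j / INR j ^ v * (Hs 1 M - Hs 1 (M - j)) <= / INR (S M) * (/ INR j + / INR (S M - j)).
Proof.
  intros Hv Hj.
  pose proof (Hs1_diff (M - j) j) as D. replace (M - j + j)%nat with M in D by lia.
  assert (PJ : 1 <= INR j) by (apply (le_INR 1); lia).
  assert (PS : 0 < INR (S (M - j))) by (apply lt_0_INR; lia).
  assert (Pv : 0 < INR j ^ v) by (apply pow_lt; lra).
  assert (Hjv : INR j ^ 2 <= INR j ^ v) by (apply Rle_pow; lia || lra).
  destruct (od_bounds j) as [O1 O2].
  split.
  - apply Rmult_le_pos; [|lra]. apply Rmult_le_pos; auto. left; apply Rinv_0_lt_compat; auto.
  - apply Rle_trans with (/ INR j ^ 2 * (INR j / INR (S (M - j)))).
    + apply Rmult_le_compat.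
      * apply Rmult_le_pos; auto. left; apply Rinv_0_lt_compat; auto.
      * lra.
      * apply Rle_trans with (1 * / INR j ^ v). apply Rmult_le_compat_r; auto. left; apply Rinv_0_lt_compat; auto.
        rewrite Rmult_1_l. apply Rinv_le_contravar; auto. apply pow_lt; lra.
      * lra.
    + replace (S M - j)%nat with (S (M - j)) by lia.
      rewrite S_INR, minus_INR in * by lia. rewrite S_INR in *.
      right. field. split; lra.
Qed.

Lemma R_bound v M : (2 <= v)%nat -> 0 <= Ss v M - Tt v M <= 2 * Hf M / INR (S M).
Proof.
  intros Hv. rewrite R_form. split.
  - apply Sm_nonneg. intros j Hj. apply (term_bound v M j Hv Hj).
  - apply Rle_trans with (Sm M (fun j => / INR (S M) * (/ INR j + / INR (S M - j)))).
    + apply Sm_le. intros j Hj. apply (term_bound v M j Hv Hj).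
    + rewrite Sm_scal, Sm_plus. unfold Hf.
      rewrite (Sm_refl M (fun j => / INR j)). right. field. apply not_0_INR; lia.
Qed.

Lemma Hf_lim : is_lim_seq (fun N => Hf (S N) / INR (S N)) 0.
Proof.
  assert (A : Un_cv (fun k => / INR (S k)) 0).
  { apply is_lim_seq_Reals.
    pose proof (is_lim_seq_inv INR p_infty is_lim_seq_INR) as H.
    simpl in H. apply is_lim_seq_incr_1 in H. apply H. discriminate. }
  pose proof (Cesaro_1 _ 0 A) as C. apply is_lim_seq_Reals in C.
  apply is_lim_seq_incr_1 in C.
  eapply is_lim_seq_ext; [|exact C]. intros N. cbv beta. change (pred (S N)) with N.
  rewrite <- sum_n_Reals. unfold Hf. rewrite <- (sumn_Sm (fun j => / INR j) N). reflexivity.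
Qed.

Lemma R_lim v : (2 <= v)%nat -> is_lim_seq (fun N => Ss v (S N) - Tt v (S N)) 0.
Proof.
  intros Hv. apply is_lim_seq_le_le with (u := fun _ => 0) (w := fun N => 2 * (Hf (S N) / INR (S N))).
  - intros N. destruct (R_bound v (S N) Hv) as [A B]. split; auto.
    apply Rle_trans with (1 := B). unfold Rdiv. rewrite Rmult_assoc. apply Rmult_le_compat_l. lra.
    apply Rmult_le_compat_l. unfold Hf. apply Sm_nonneg. intros. left; apply Rinv_0_lt_compat, lt_0_INR; lia.
    apply Rinv_le_contravar. apply lt_0_INR; lia. apply le_INR; lia.
  - apply is_lim_seq_const.
  - replace (Finite 0) with (Rbar_mult 2 0) by (simpl; f_equal; ring).
    apply is_lim_seq_scal_l. apply Hf_lim.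
Qed.


Definition Z2 (M : nat) : R := Sm M (fun m => / INR m ^ 2).
Definition F2 (M : nat) : R := Sm M (fun m => / INR m ^ 2 * Hf (pred m)).

Lemma Z2_bound M : Z2 M <= 2 - 2 / INR (S M).
Proof.
  induction M.
  - unfold Z2; simpl. lra.
  - unfold Z2 in *. rewrite Sm_S.
    rewrite (S_INR (S M)). rewrite S_INR in *. set (x := INR M) in *.
    assert (Hx : 0 <= x) by apply pos_INR.
    assert (E: 2/(x+1) - 2/(x+1+1) - /(x+1)^2 = x / ((x+1)^2*(x+1+1))) by (field; lra).
    assert (0 <= x / ((x+1)^2*(x+1+1))).
    { apply Rmult_le_pos; auto. left; apply Rinv_0_lt_compat. apply Rmult_lt_0_compat; [apply pow_lt|]; lra. }
    lra.
Qed.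

Lemma Z2_le2 M : Z2 M <= 2.
Proof.
  pose proof (Z2_bound M). assert (0 <= 2 / INR (S M)).
  { apply Rmult_le_pos. lra. left; apply Rinv_0_lt_compat, lt_0_INR; lia. } lra.
Qed.

Lemma Hf_nonneg M : 0 <= Hf M.
Proof. apply Sm_nonneg. intros; left; apply Rinv_0_lt_compat, lt_0_INR; lia. Qed.

Lemma F2_bound M : F2 M + Hf M / INR M <= Z2 M.
Proof.
  induction M.
  - unfold F2, Z2, Hf; simpl. unfold Rdiv; rewrite Rmult_0_l. lra.
  - unfold F2, Z2 in *. rewrite !Sm_S. change (pred (S M)) with M.
    replace (Hf (S M)) with (Hf M + / INR (S M)) by reflexivity.
    destruct M.
    + unfold Hf; simpl. rewrite Rinv_1. unfold Rdiv. lra.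
    + pose proof (Hf_nonneg (S M)) as HH.
      set (h := Hf (S M)) in *. rewrite (S_INR (S M)) in *. set (x := INR (S M)) in *.
      assert (Hx : 1 <= x) by (unfold x; apply (le_INR 1); lia).
      assert (E : h / x - (/ (x+1)^2 * h + (h + / (x+1)) / (x+1) - / (x+1)^2)
                = h / (x * (x+1)^2)) by (field; lra).
      assert (0 <= h / (x * (x+1)^2)).
      { apply Rmult_le_pos; auto. left; apply Rinv_0_lt_compat. apply Rmult_lt_0_compat; [|apply pow_lt]; lra. }
      lra.
Qed.

Lemma F2_le2 M : F2 M <= 2.
Proof.
  pose proof (F2_bound M). pose proof (Z2_le2 M).
  assert (0 <= Hf M / INR M).
  { apply Rmult_le_pos. apply Hf_nonneg. destruct M. simpl; rewrite Rinv_0; lra.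
    left; apply Rinv_0_lt_compat, lt_0_INR; lia. }
  lra.
Qed.

Lemma conv_abs_Sm (g : nat -> R) B : (forall M, Sm M (fun m => Rabs (g m)) <= B) ->
  ex_finite_lim_seq (fun N => Sm (S N) g).
Proof.
  intros HB.
  assert (ES : ex_series (fun k => Rabs (g (S k)))).
  { destruct (ex_finite_lim_seq_incr (sum_n (fun k => Rabs (g (S k)))) B) as [l Hl].
    - intros n. rewrite sum_Sn. change plus with Rplus. pose proof (Rabs_pos (g (S (S n)))). lra.
    - intros n. rewrite (sumn_Sm (fun m => Rabs (g m))). apply HB.
    - exists l. exact Hl. }
  apply ex_series_Rabs in ES. destruct ES as [l Hl]. exists l.
  eapply is_lim_seq_ext; [|exact Hl]. intros N. apply (sumn_Sm g).
Qed.

Lemma pow_abs1 z m : Rabs z = 1 -> Rabs (z ^ m) = 1.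
Proof. intros H. rewrite <- RPow_abs, H. apply pow1. Qed.

Lemma inv_pow_le m s t : (1 <= m)%nat -> (t <= s)%nat -> / INR m ^ s <= / INR m ^ t.
Proof.
  intros Hm Hts. assert (1 <= INR m) by (apply (le_INR 1); lia).
  apply Rinv_le_contravar. apply pow_lt; lra. apply Rle_pow; auto.
Qed.

Lemma abs_term z m s : Rabs z = 1 -> (1 <= m)%nat -> Rabs (z ^ m / INR m ^ s) = / INR m ^ s.
Proof.
  intros Hz Hm. unfold Rdiv. rewrite Rabs_mult, pow_abs1 by auto. rewrite Rmult_1_l.
  apply Rabs_right. left. apply Rinv_0_lt_compat, pow_lt, lt_0_INR; lia.
Qed.

Lemma conv_e1 s z : (2 <= s)%nat -> Rabs z = 1 -> ex_finite_lim_seq (euler1_partial s z).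
Proof.
  intros Hs Hz.
  destruct (conv_abs_Sm (fun m => z^m / INR m ^ s) 2) as [l Hl].
  - intros M. apply Rle_trans with (Z2 M); [|apply Z2_le2]. apply Sm_le. intros m Hm.
    rewrite abs_term by (auto; lia). apply inv_pow_le; lia.
  - exists l. eapply is_lim_seq_ext; [|exact Hl]. intros N. symmetry. apply euler1_Sm.
Qed.

Lemma inner_abs z s p : Rabs z = 1 -> (1 <= s)%nat ->
  Rabs (Sm p (fun j => z^j / INR j ^ s)) <= Hf p.
Proof.
  intros Hz Hs. eapply Rle_trans. apply Sm_abs. apply Sm_le. intros j Hj.
  rewrite abs_term by (auto; lia). rewrite <- (pow_1 (INR j)) at 2. apply inv_pow_le; lia.
Qed.

Lemma conv_e2 s1 s2 z1 z2 : (2 <= s1)%nat -> (1 <= s2)%nat -> Rabs z1 = 1 -> Rabs z2 = 1 ->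
  ex_finite_lim_seq (euler2_partial s1 s2 z1 z2).
Proof.
  intros H1 H2 Hz1 Hz2.
  destruct (conv_abs_Sm (fun m => z1^m / INR m ^ s1 * Sm (pred m) (fun j => z2^j / INR j ^ s2)) 2) as [l Hl].
  - intros M. apply Rle_trans with (F2 M); [|apply F2_le2]. apply Sm_le. intros m Hm.
    rewrite Rabs_mult, abs_term by (auto; lia). apply Rmult_le_compat.
    + left; apply Rinv_0_lt_compat, pow_lt, lt_0_INR; lia.
    + apply Rabs_pos.
    + apply inv_pow_le; lia.
    + apply inner_abs; auto.
  - exists l. eapply is_lim_seq_ext; [|exact Hl]. intros N. symmetry. apply euler2_Sm.
Qed.

Lemma conv_T2 a b : (2 <= a)%nat -> (1 <= b)%nat -> ex_finite_lim_seq (T2_partial a b).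
Proof.
  intros Ha Hb.
  destruct (conv_abs_Sm (fun m => 4 * ev m / INR m ^ a * Sm (pred m) (fun j => od j / INR j ^ b)) 8) as [l Hl].
  - intros M. apply Rle_trans with (4 * F2 M); [|pose proof (F2_le2 M); lra].
    unfold F2. rewrite <- Sm_scal. apply Sm_le. intros m Hm.
    assert (P : 0 < / INR m ^ a) by (apply Rinv_0_lt_compat, pow_lt, lt_0_INR; lia).
    assert (I0 : 0 <= Sm (pred m) (fun j => od j / INR j ^ b)).
    { apply Sm_nonneg. intros j Hj. apply Rmult_le_pos. apply od_bounds.
      left; apply Rinv_0_lt_compat, pow_lt, lt_0_INR; lia. }
    assert (I1 : Sm (pred m) (fun j => od j / INR j ^ b) <= Hf (pred m)).
    { apply Sm_le. intros j Hj. apply Rle_trans with (1 * / INR j ^ b).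
      apply Rmult_le_compat_r. left; apply Rinv_0_lt_compat, pow_lt, lt_0_INR; lia. apply od_bounds.
      rewrite Rmult_1_l. rewrite <- (pow_1 (INR j)) at 2. apply inv_pow_le; lia. }
    assert (E0 : 0 <= ev m <= 1) by (rewrite ev_od; pose proof (od_bounds m); lra).
    assert (Q : / INR m ^ a <= / INR m ^ 2) by (apply inv_pow_le; lia).
    rewrite Rabs_right.
    + unfold Rdiv. replace (4 * ev m * / INR m ^ a * Sm (pred m) (fun j => od j * / INR j ^ b))
        with (4 * (ev m * / INR m ^ a * Sm (pred m) (fun j => od j / INR j ^ b))) by (unfold Rdiv; ring).
      apply Rmult_le_compat_l. lra.
      apply Rmult_le_compat; try nra. 
    + apply Rle_ge. unfold Rdiv. apply Rmult_le_pos; [|exact I0]. apply Rmult_le_pos; [|lra]. lra.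
  - exists l. eapply is_lim_seq_ext; [|exact Hl]. intros N. symmetry. apply T2_Sm.
Qed.


Lemma tail_bound (f : nat -> R) n k : (1 <= n)%nat ->
  (forall j, (1 <= j)%nat -> Rabs (f j) <= / INR j ^ 2) ->
  Rabs (Sm (n + k) f - Sm n f) <= / INR n - / INR (n + k).
Proof.
  intros Hn Hf. induction k.
  - rewrite Nat.add_0_r. unfold Rminus. rewrite Rplus_opp_r, Rabs_R0. lra.
  - replace (n + S k)%nat with (S (n + k)) by lia. rewrite Sm_S.
    pose proof (Hf (S (n+k)) ltac:(lia)) as T.
    replace (Sm (n + k) f + f (S (n + k)) - Sm n f) with ((Sm (n + k) f - Sm n f) + f (S (n+k))) by ring.
    eapply Rle_trans. apply Rabs_triang.
    rewrite S_INR in *. set (y := INR (n+k)) in *.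
    assert (Hy : 1 <= y) by (unfold y; apply (le_INR 1); lia).
    assert (E : / y - / (y+1) - / (y+1)^2 = / (y * (y+1)^2)) by (field; lra).
    assert (0 <= / (y * (y+1)^2)) by (left; apply Rinv_0_lt_compat; apply Rmult_lt_0_compat; [|apply pow_lt]; lra).
    lra.
Qed.

Lemma alt_conv : ex_finite_lim_seq (fun N => Sm (S N) (fun m => (-1)^m / INR m ^ 1)).
Proof.
  assert (Dec : Un_decreasing (fun i => / INR (S i))).
  { intros n. apply Rinv_le_contravar. apply lt_0_INR; lia. apply le_INR; lia. }
  assert (A : Un_cv (fun k => / INR (S k)) 0).
  { apply is_lim_seq_Reals.
    pose proof (is_lim_seq_inv INR p_infty is_lim_seq_INR) as H.
    simpl in H. apply is_lim_seq_incr_1 in H. apply H. discriminate. }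
  destruct (alternated_series _ Dec A) as [l Hl].
  exists (- l). apply is_lim_seq_Reals in Hl.
  replace (Finite (- l)) with (Rbar_opp l) by reflexivity.
  apply is_lim_seq_opp in Hl.
  eapply is_lim_seq_ext; [|exact Hl]. intros N. cbv beta. rewrite <- sum_n_Reals.
  rewrite <- (sumn_Sm (fun m => (-1)^m / INR m ^ 1)).
  match goal with |- - ?X = _ => replace (- X) with (-1 * X) by ring end.
  rewrite <- (sum_n_scal (-1)). apply sum_n_ext. intros k. match goal with |- ?a = ?b => change (@eq R a b) end. unfold tg_alt. change ((-1)^(S k)) with (-1 * (-1)^k). rewrite pow_1. field.
  apply not_0_INR; lia.
Qed.

Lemma abs_m1 : Rabs (-1) = 1.
Proof. rewrite Rabs_left; lra. Qed.

Lemma conv_e2c v z : (2 <= v)%nat -> Rabs z = 1 -> ex_finite_lim_seq (euler2_partial 1 v (-1) z).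
Proof.
  intros Hv Hz.
  set (B := fun n => Sm n (fun j => z^j / INR j ^ v)).
  destruct (conv_e1 v z Hv Hz) as [b Hb].
  assert (HB : is_lim_seq B b).
  { apply is_lim_seq_incr_1. eapply is_lim_seq_ext; [|exact Hb]. intros N. apply euler1_Sm. }
  assert (Tail : forall n, (1 <= n)%nat -> Rabs (b - B n) <= / INR n).
  { intros n Hn.
    assert (L : is_lim_seq (fun k => Rabs (B (k + n)%nat - B n)) (Rabs (b - B n))).
    { apply (is_lim_seq_abs _ (b - B n)). apply is_lim_seq_minus'.
      apply (is_lim_seq_incr_n B n b). exact HB. apply is_lim_seq_const. }
    assert (LEk : forall k, Rabs (B (k + n)%nat - B n) <= / INR n).
    { intros k.
      replace (k + n)%nat with (n + k)%nat by lia.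
      eapply Rle_trans. apply (tail_bound (fun j => z^j / INR j ^ v)); auto.
      intros j Hj. rewrite abs_term by (auto; lia). apply inv_pow_le; lia.
      assert (0 <= / INR (n + k)). { left; apply Rinv_0_lt_compat, lt_0_INR; lia. } lra. }
    pose proof (is_lim_seq_le _ _ _ _ LEk L (is_lim_seq_const (/ INR n))) as LE.
    simpl in LE. exact LE. }
  destruct alt_conv as [a Ha].
  destruct (conv_abs_Sm (fun m => (-1)^m / INR m ^ 1 * (B (pred m) - b)) ((Rabs b + 2) * 2)) as [c Hc].
  - intros M. apply Rle_trans with ((Rabs b + 2) * Z2 M).
    + unfold Z2. rewrite <- Sm_scal. apply Sm_le. intros m Hm.
      rewrite Rabs_mult, abs_term by (auto; try lia; apply abs_m1).
      assert (Pm : 1 <= INR m) by (apply (le_INR 1); lia).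
      destruct (Nat.eq_dec m 1) as [E|E].
      * subst m. simpl. unfold B; simpl. rewrite Rminus_0_l, Rabs_Ropp. lra.
      * rewrite Rabs_minus_sym. pose proof (Tail (pred m) ltac:(lia)) as T.
        rewrite pow_1. 
        assert (Pm2 : INR (pred m) = INR m - 1) by (replace (pred m) with (m - 1)%nat by lia; rewrite minus_INR by lia; reflexivity).
        rewrite Pm2 in T.
        assert (Pm3 : 2 <= INR m) by (apply (le_INR 2); lia).
        apply Rle_trans with (/ INR m * / (INR m - 1)).
        apply Rmult_le_compat_l. left; apply Rinv_0_lt_compat; lra. auto.
        apply Rle_trans with (2 * / INR m ^ 2).
        -- assert (E2 : 2 * / INR m ^ 2 - / INR m * / (INR m - 1) = (INR m - 2) / (INR m ^ 2 * (INR m - 1)))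
             by (field; lra).
           assert (0 <= (INR m - 2) / (INR m ^ 2 * (INR m - 1))).
           { apply Rmult_le_pos. lra. left; apply Rinv_0_lt_compat. apply Rmult_lt_0_compat; [apply pow_lt|]; lra. }
           lra.
        -- apply Rmult_le_compat_r. left; apply Rinv_0_lt_compat, pow_lt; lra.
           pose proof (Rabs_pos b). lra.
    + pose proof (Z2_le2 M). pose proof (Rabs_pos b). nra.
  - exists (b * a + c).
    eapply is_lim_seq_ext; [|apply is_lim_seq_plus'; [apply (is_lim_seq_scal_l _ b a Ha) | exact Hc]].
    intros N. rewrite euler2_Sm. rewrite <- Sm_scal, <- Sm_plus. apply Sm_ext. intros m Hm.
    unfold B. ring.
Qed.


Lemma fin_lim u : ex_finite_lim_seq u -> is_lim_seq u (real (Lim_seq u)).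
Proof. intros [l Hl]. rewrite (is_lim_seq_unique _ _ Hl). simpl. exact Hl. Qed.

Lemma lhs_lim n K : (K <= n)%nat ->
  is_lim_seq (fun N => sum_n (fun k => T2_partial (k+2) ((n+3) - (k+2)) N) K)
             (sum_n (fun k => T2 (k+2) ((n+3) - (k+2))) K).
Proof.
  induction K; intros HK.
  - apply (is_lim_seq_ext (fun N => T2_partial (0+2) ((n+3) - (0+2)) N)).
    { intros N. rewrite sum_O. reflexivity. }
    rewrite sum_O. apply fin_lim. apply conv_T2; lia.
  - apply (is_lim_seq_ext (fun N => sum_n (fun k => T2_partial (k+2) ((n+3) - (k+2)) N) K
        + T2_partial (S K + 2) ((n+3) - (S K + 2)) N)).
    { intros N. rewrite sum_Sn. reflexivity. }
    rewrite sum_Sn. apply is_lim_seq_plus'. apply IHK; lia.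
    apply fin_lim. apply conv_T2; lia.
Qed.

Lemma L_eq n N : sum_n (fun k => T2_partial (k+2) ((n+3) - (k+2)) N) n = Sm (S N) (rowL n).
Proof.
  rewrite (sum_n_ext _ (fun k => Sm (S N) (fun m => 4 * ev m / INR m ^ (k+2) *
     Sm (pred m) (fun j => od j / INR j ^ ((n+3) - (k+2)))))).
  2:{ intros k. apply T2_Sm. }
  rewrite Sm_swap. reflexivity.
Qed.

Lemma R_eq n N : 2 * (euler1_partial (n+3) 1 N - euler1_partial (n+3) (-1) N
   + euler2_partial (n+2) 1 (-1) (-1) N + euler2_partial 1 (n+2) (-1) (-1) N
   - euler2_partial (n+2) 1 (-1) 1 N - euler2_partial 1 (n+2) (-1) 1 N)
  = Sm (S N) (fun m => 2 * rowR n m).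
Proof.
  rewrite Sm_scal. unfold rowR.
  rewrite !Sm_minus, !Sm_plus, !Sm_minus.
  rewrite !euler1_Sm, !euler2_Sm. reflexivity.
Qed.

Lemma scal_lim (u : nat -> R) (c l : R) : is_lim_seq u l -> is_lim_seq (fun N => c * u N) (c * l).
Proof. intros H. apply (is_lim_seq_scal_l u c l H). Qed.

Theorem corollary4p3 (w : nat) (hw : (3 <= w)%nat) :
  let v := (w - 1)%nat in
  sum_n (fun k => T2 (k + 2) (w - (k + 2))) (w - 3)
  = 2 * ( euler1 w 1 - euler1 w (-1)
        + euler2 v 1 (-1) (-1) + euler2 1 v (-1) (-1)
        - euler2 v 1 (-1) 1 - euler2 1 v (-1) 1 ).
Proof.
  intros v. unfold v. clear v.
  destruct (Nat.le_exists_sub 3 w hw) as [n [En _]]. subst w.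
  replace (n + 3 - 1)%nat with (n + 2)%nat by lia.
  replace (n + 3 - 3)%nat with n by lia.
  assert (Hm1 := abs_m1). assert (H1 : Rabs 1 = 1) by apply Rabs_R1.
  pose proof (lhs_lim n n (le_n n)) as LL.
  assert (RL : is_lim_seq (fun N => 2 * (euler1_partial (n+3) 1 N - euler1_partial (n+3) (-1) N
   + euler2_partial (n+2) 1 (-1) (-1) N + euler2_partial 1 (n+2) (-1) (-1) N
   - euler2_partial (n+2) 1 (-1) 1 N - euler2_partial 1 (n+2) (-1) 1 N))
   (2 * ( euler1 (n+3) 1 - euler1 (n+3) (-1)
        + euler2 (n+2) 1 (-1) (-1) + euler2 1 (n+2) (-1) (-1)
        - euler2 (n+2) 1 (-1) 1 - euler2 1 (n+2) (-1) 1 ))).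
  { apply scal_lim.
    repeat apply is_lim_seq_minus' || apply is_lim_seq_plus'.
    all: apply fin_lim.
    all: first [ apply conv_e1; auto; lia | apply conv_e2; auto; lia | apply conv_e2c; auto; lia ]. }
  pose proof (is_lim_seq_minus' _ _ _ _ LL RL) as D.
  assert (D0 : is_lim_seq (fun N => sum_n (fun k => T2_partial (k + 2) (n + 3 - (k + 2)) N) n -
       2 * (euler1_partial (n+3) 1 N - euler1_partial (n+3) (-1) N
   + euler2_partial (n+2) 1 (-1) (-1) N + euler2_partial 1 (n+2) (-1) (-1) N
   - euler2_partial (n+2) 1 (-1) 1 N - euler2_partial 1 (n+2) (-1) 1 N)) 0).
  { apply (is_lim_seq_ext (fun N => -4 * (Ss (n+2) (S N) - Tt (n+2) (S N)))).
    - intros N. rewrite L_eq, R_eq, <- Sm_minus.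
      replace (-4 * (Ss (n + 2) (S N) - Tt (n + 2) (S N))) with (4 * (Tt (n + 2) (S N) - Ss (n + 2) (S N))) by ring.
      rewrite TS_Sm, <- Sm_scal. apply Sm_ext. intros m Hm. rewrite <- row_id by lia. ring.
    - replace (Finite 0) with (Finite (-4 * 0)) by (f_equal; ring).
      apply scal_lim. apply R_lim. lia. }
  apply is_lim_seq_unique in D. apply is_lim_seq_unique in D0. rewrite D0 in D.
  injection D. intros E. lra.
Qed.
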